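(* Let $i,m,n\in\mathbb{N}_0$ with $m<n+i$, and let \[ \mathcal{F}_{i,m,n}=\{p(x)+x^i\ln(x)q(x):\ p\in\Pi_m,\ q\in\Pi_n\}, \] considered as functions on $(1,\infty)$. Then every nonzero $f\in\mathcal{F}_{i,m,n}$ has at most $2n+i$ distinct zeros in $(1,\infty)$. In particular, if $m=n+i-1$, every nonzero $f\in\mathcal{F}_{i,m,n}$ has fewer than $m+n+2$ distinct zeros in $(1,\infty)$.
   Context: $\Pi_n$ denotes the space of real polynomials of degree at most $n$. *)

(* Defs.v *)
From HB Require Import structures.
From mathcomp Require Import all_boot all_order all_algebra.
From mathcomp Require Import all_classical all_reals all_analysis.
Set Implicit Arguments. Unset Strict Implicit. Unset Printing Implicit Defensive.
Import Order.TTheory GRing.Theory Num.Theory.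
Local Open Scope ring_scope.

Definition inPi (R : realType) (k : nat) (p : {poly R}) : bool := (size p <= k.+1)%N.

Definition Ffun (R : realType) (i : nat) (p q : {poly R}) (x : R) : R :=
  p.[x] + x ^+ i * ln x * q.[x].

(* Main.v *)
Require Import Defs.
From HB Require Import structures.
From mathcomp Require Import all_boot all_order all_algebra.
From mathcomp Require Import all_classical all_reals all_analysis.
From mathcomp Require Import lra ring zify.
Import Order.TTheory GRing.Theory Num.Theory.
Local Open Scope ring_scope.

Section S.
Variable R : realType.
Implicit Types A B : {poly R}.

Definition G A B (x : R) := A.[x] + ln x * B.[x].
Definition dG A B (x : R) := A^`().[x] + (x^-1 * B.[x] + ln x * B^`().[x]).

Lemma derG A B (x : R) : 0 < x -> is_derive x 1 (G A B) (dG A B x).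
Proof.
move=> x0; have hl := is_derive1_ln x0.
rewrite (_ : G A B = horner A + (@ln R) * horner B); last by apply/funext.
apply: is_derive_eq; rewrite /dG /=.
rewrite /GRing.scale /=; ring.
Qed.

Definition H (l : nat) A B (y : R) := G A B y / y ^+ l.

Definition opA (l : nat) A B := A^`() * 'X - l%:R *: A + B.
Definition opB (l : nat) B := B^`() * 'X - l%:R *: B.

Lemma G_op l A B (x : R) : 0 < x ->
  x * dG A B x - l%:R * G A B x = G (opA l A B) (opB l B) x.
Proof.
move=> x0; rewrite /dG /G /opA /opB !hornerE.
have : x != 0 by rewrite gt_eqF.
move=> xn0. rewrite /=. by field.
Qed.

Lemma derH l A B (x : R) : 0 < x ->
  is_derive x 1 (H l A B) (G (opA l A B) (opB l B) x / x ^+ l.+1).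
Proof.
move=> x0; have xn0 : x != 0 by rewrite gt_eqF.
have xl0 : x ^+ l != 0 by rewrite expf_neq0.
have hG := derG A B x x0.
have hX : is_derive x 1 ((@id R) ^+ l) ((l%:R * x ^+ l.-1) *: (1:R)).
  by apply: is_deriveX.
have nz : ((@id R) ^+ l) x != 0 by rewrite exprfctE.
have hV := is_deriveV nz hX.
rewrite (_ : H l A B = G A B * (fun y => (((@id R) ^+ l) y)^-1)); last first.
  by apply/funext => y; rewrite exprfctE.
apply: is_derive_eq; rewrite -G_op //.
have e : l%:R * x ^+ l.-1 * x = l%:R * x ^+ l by case: l {xl0 hX hV nz} => [|l]; rewrite ?mul0r // -mulrA -exprSr.
rewrite /GRing.scale /= mulr1 exprS.
set P := x ^+ l. set g := G A B x. set d := dG A B x.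
rewrite !exprfctE expr1 -/P.
have -> : l%:R * x ^+ l.-1 = l%:R * P / x by rewrite -e mulfK.
rewrite exprS -/P. field. by rewrite xl0 xn0.
Qed.

Lemma rolle_path (f df : R -> R) :
  (forall x : R, 1 < x -> is_derive x 1 f (df x)) ->
  forall (l : seq R) (x : R), path <%R x l -> 1 < x -> f x = 0 -> (forall y, y \in l -> f y = 0) ->
  exists t, [/\ path <%R x t, size t = size l & forall y, y \in t -> df y = 0].
Proof.
move=> hd; elim=> [|y l IH] x /=.
  by move=> *; exists [::].
move=> /andP[xy py] x1 fx fl.
have y1 : 1 < y by apply: lt_trans xy.
have fy : f y = 0 by apply: fl; rewrite inE eqxx.
have [t [pt st ht]] := IH y py y1 fy (fun z hz => fl z (@mem_behead _ (y :: l) _ hz)).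
have der : forall z, z \in `]x, y[%R -> derivable f z 1.
  move=> z; rewrite in_itv /= => /andP[xz _].
  by case: (hd z (lt_trans x1 xz)).
have cont := @derivable_within_continuous R R^o f `[x, y]%R (fun z zi =>
  match hd z (lt_le_trans x1 (andP zi).1) with DeriveDef h _ => h end).
have [c cxy dc] := Rolle xy der cont (etrans fx (esym fy)).
move: cxy; rewrite in_itv /= => /andP[xc cy].
exists (c :: t); split => //=.
- rewrite xc /=; rewrite (path_sortedE lt_trans) in pt; rewrite (path_sortedE lt_trans).
  case/andP: pt => al st'; rewrite st' andbT.
  by apply: sub_all al => z; apply: lt_trans.
- by rewrite st.
- move=> z; rewrite inE => /orP[/eqP ->|/ht //].
  have h1 := hd c (lt_trans x1 xc).
  by rewrite -(@derive_val _ _ _ _ _ _ _ h1) (@derive_val _ _ _ _ _ _ _ dc).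
Qed.

Lemma rolle_count (f df : R -> R) :
  (forall x : R, 1 < x -> is_derive x 1 f (df x)) ->
  forall s : seq R, uniq s -> (forall x, x \in s -> 1 < x /\ f x = 0) ->
  exists t, [/\ uniq t, (size s <= (size t).+1)%N & forall x, x \in t -> 1 < x /\ df x = 0].
Proof.
move=> hd s us hs.
have ss : sorted <%R (sort <=%R s) by rewrite sort_lt_sorted.
have ms : forall z, z \in sort <=%R s = (z \in s) by move=> z; rewrite mem_sort.
case es: (sort <=%R s) ss => [|x l] ss.
  exists [::]; split => //.
  by rewrite -(size_sort <=%R s) es.
have xin : x \in s by rewrite -ms es inE eqxx.
have [x1 fx] := hs x xin.
have fl : forall y, y \in l -> f y = 0.
  by move=> y hy; apply: (hs y _).2; rewrite -ms es inE hy orbT.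
have [t [pt st ht]] := @rolle_path f df hd l x ss x1 fx fl.
exists t; split.
- by rewrite (path_sortedE lt_trans) in pt; case/andP: pt => _ /(sorted_uniq lt_trans ltxx).
- by rewrite -(size_sort <=%R s) es /= st.
- move=> y yt; split; last exact: ht.
  rewrite (path_sortedE lt_trans) in pt; case/andP: pt => /allP /(_ y yt) xy _.
  exact: lt_trans xy.
Qed.

Definition Pn A B (k : nat) : bool := (A`_k != 0) || (B`_k != 0).
Definition w A B (k : nat) : nat := (Pn A B k + (B`_k != 0)%R)%N.
Definition W (M : nat) A B : nat := (\sum_(k < M.+1) w A B k)%N.
Definition flag (M : nat) A B : bool := (B`_M != 0) && (0 <= A`_M * B`_M).

Lemma coef_opA l A B k : (opA l A B)`_k = (k%:R - l%:R) * A`_k + B`_k.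
Proof.
rewrite /opA coefD coefB coefMX coefZ.
case: k => [|k] /=; first by rewrite sub0r; ring.
rewrite coef_deriv -mulr_natl mulrBl. ring.
Qed.

Lemma coef_opB l B k : (opB l B)`_k = (k%:R - l%:R) * B`_k.
Proof.
rewrite /opB coefB coefMX coefZ.
case: k => [|k] /=; first by rewrite sub0r; ring.
rewrite coef_deriv -mulr_natl mulrBl. ring.
Qed.

Lemma cne (k l : nat) : k != l -> (k%:R - l%:R : R) != 0.
Proof. by rewrite subr_eq0 eqr_nat. Qed.

Lemma Pn_op_ne l A B k : k != l -> Pn (opA l A B) (opB l B) k = Pn A B k.
Proof.
move=> /cne c0; rewrite /Pn coef_opA coef_opB mulf_eq0 (negbTE c0) /=.
case: (eqVneq (B`_k) 0) => [->|bn]; last by rewrite !orbT.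
by rewrite addr0 mulf_eq0 (negbTE c0) /= !orbF.
Qed.

Lemma w_op_ne l A B k : k != l -> w (opA l A B) (opB l B) k = w A B k.
Proof.
move=> kl; rewrite /w Pn_op_ne // coef_opB mulf_eq0 (negbTE (@cne k l kl)) //.
Qed.

Lemma w_op_eq l A B : Pn A B l -> (w (opA l A B) (opB l B) l).+1 = w A B l.
Proof.
rewrite /w /Pn coef_opA coef_opB !subrr !mul0r add0r eqxx orbF => ->.
by case: (B`_l != 0).
Qed.

Lemma W_split M A B l : (l <= M)%N ->
  W M A B = (w A B l + \sum_(k < M.+1 | k != l :> nat) w A B k)%N.
Proof.
move=> lM; have lM' : (l < M.+1)%N by rewrite ltnS.
rewrite /W (bigD1 (Ordinal lM')) //=.
Qed.

Lemma horner_single A l (x : R) : (forall k, k != l -> A`_k = 0) -> A.[x] = A`_l * x ^+ l.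
Proof.
move=> h.
have sA : (size A <= l.+1)%N.
  by apply/leq_sizeP => j lj; apply: h; rewrite neq_ltn lj orbT.
rewrite (horner_coef_wide _ sA) big_ord_recr /= big1 ?add0r // => i _.
by rewrite h ?mul0r // neq_ltn ltn_ord.
Qed.

Lemma base_count A B l (s : seq R) : (forall k, k != l -> A`_k = 0 /\ B`_k = 0) -> Pn A B l ->
  uniq s -> (forall x, x \in s -> 1 < x /\ G A B x = 0) ->
  (size s + 1 + ((B`_l != 0) && (0 <= A`_l * B`_l))%R <= w A B l)%N.
Proof.
move=> h hP us hs.
have hG x : G A B x = x ^+ l * (A`_l + ln x * B`_l).
  rewrite /G (@horner_single A l) ?(@horner_single B l); first by ring.
  by move=> k /h [].
  by move=> k /h [].
rewrite /w hP /=.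
set a := A`_l in hP hG *; set b := B`_l in hP hG *.
have xl0 (x : R) : 1 < x -> x ^+ l != 0 by move=> x1; rewrite expf_neq0 // gt_eqF // (lt_trans ltr01 x1).
case: (eqVneq b 0) => [b0|bn].
  have a0 : a != 0 by move: hP; rewrite /Pn -/a -/b b0 eqxx orbF.
  case: s us hs => [|x r] // _ hs.
  have [x1 /eqP] := hs x (mem_head _ _).
  by rewrite hG b0 mulr0 addr0 mulf_eq0 (negbTE (xl0 _ x1)) (negbTE a0).
have ln_ne (x : R) : 1 < x -> G A B x = 0 -> a + ln x * b = 0.
  by move=> x1 /eqP; rewrite hG mulf_eq0 (negbTE (xl0 _ x1)) => /eqP.
case: (lerP 0 (a * b)) => ab /=.
  case: s us hs => [|x r] // _ hs.
  have [x1 gx] := hs x (mem_head _ _).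
  have := ln_ne x x1 gx => e.
  have lx := ln_gt0 x1.
  have : 0 < b * (a + ln x * b).
    have -> : b * (a + ln x * b) = a * b + ln x * b ^+ 2 by ring.
    by rewrite ltr_wpDl // mulr_gt0 // exprn_even_gt0.
  by rewrite e mulr0 ltxx.
case: s us hs => [|x [|y r]] //= /andP[nx _] hs.
have [x1 gx] := hs x (mem_head _ _).
have yin : y \in [:: x, y & r] by rewrite !inE eqxx orbT.
have [y1 gy] := hs y yin.
have ex := ln_ne x x1 gx; have ey := ln_ne y y1 gy.
have : ln x = ln y.
  apply: (mulIf bn); apply: (addrI a); by rewrite ex ey.
move/ln_inj; rewrite !posrE (lt_trans ltr01 x1) (lt_trans ltr01 y1) => /(_ isT isT) xy.
by move: nx; rewrite xy inE eqxx.
Qed.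

Lemma Pn_le M A B k : (forall k, (M < k)%N -> A`_k = 0 /\ B`_k = 0) -> Pn A B k -> (k <= M)%N.
Proof.
move=> hM hk; rewrite leqNgt; apply/negP => /hM [a b].
by move: hk; rewrite /Pn a b eqxx.
Qed.

Lemma key M W0 : forall A B, (forall k, (M < k)%N -> A`_k = 0 /\ B`_k = 0) ->
  (exists k, Pn A B k) -> (W M A B <= W0)%N ->
  forall s : seq R, uniq s -> (forall x, x \in s -> 1 < x /\ G A B x = 0) ->
  (size s + 1 + flag M A B <= W M A B)%N.
Proof.
elim: W0 => [|W0 IH] A B hM hnz hW s us hs.
  case: hnz => k hk; have kM := Pn_le _ _ _ _ hM hk.
  move: hW; rewrite (W_split _ _ _ _ kM) /w hk; lia.
case: (ex_minnP hnz) => l hl hmin.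
have lM := Pn_le _ _ _ _ hM hl.
case: (pselect (exists k, (l < k)%N && Pn A B k)) => [[k /andP[lk hk]] | nok].
  set A' := opA l A B; set B' := opB l B.
  have kM := Pn_le _ _ _ _ hM hk.
  have lM' : (l < M)%N by apply: leq_trans lk kM.
  have hM' : forall k, (M < k)%N -> A'`_k = 0 /\ B'`_k = 0.
    by move=> j /hM [a b]; rewrite /A' /B' coef_opA coef_opB a b mulr0 addr0.
  have hnz' : exists k, Pn A' B' k.
    by exists k; rewrite /A' /B' Pn_op_ne // gtn_eqF.
  have eW : (W M A' B').+1 = W M A B.
    rewrite !(W_split _ _ _ _ lM) -addSn /A' /B' w_op_eq //; congr (_ + _)%N.
    by apply: eq_bigr => j jl; rewrite w_op_ne.
  have fl : flag M A B ==> flag M A' B'.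
    apply/implyP; rewrite /flag /A' /B' coef_opA coef_opB => /andP[bn ab].
    have c0 : (0 : R) < M%:R - l%:R by rewrite subr_gt0 ltr_nat.
    rewrite mulf_eq0 (negbTE bn) gt_eqF //=.
    set c := (M%:R - l%:R) in c0 *.
    have -> : (c * A`_M + B`_M) * (c * B`_M) = c ^+ 2 * (A`_M * B`_M) + c * B`_M ^+ 2 by ring.
    by rewrite addr_ge0 // mulr_ge0 // ?exprn_even_ge0 // ltW.
  have hd : forall x : R, 1 < x -> is_derive x 1 (H l A B) ((fun y => G A' B' y / y ^+ l.+1) x).
    by move=> x x1; apply: derH; apply: lt_trans x1.
  have hs' : forall x, x \in s -> 1 < x /\ H l A B x = 0.
    by move=> x /hs [x1 gx]; split => //; rewrite /H gx mul0r.
  have [t [ut st ht]] := @rolle_count (H l A B) (fun y => G A' B' y / y ^+ l.+1) hd s us hs'.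
  have ht' : forall x, x \in t -> 1 < x /\ G A' B' x = 0.
    move=> x /ht [x1 /eqP]; have xn0 : x != 0 by rewrite gt_eqF // (lt_trans ltr01 x1).
    rewrite mulf_eq0 invr_eq0 expf_eq0 (negbTE xn0) andbF orbF => /eqP gx; by [].
  have := IH A' B' hM' hnz' _ t ut ht'.
  move: fl eW st hW; case: (flag M A B); case: (flag M A' B') => //= _; lia.
have h : forall k, k != l -> A`_k = 0 /\ B`_k = 0.
  move=> k kl.
  have nk : ~~ Pn A B k.
    apply/negP => pk; case: (ltngtP k l) kl => // [kl' | lk'] _.
      by have := hmin k pk; rewrite leqNgt kl'.
    by apply: nok; exists k; rewrite lk'.
  by move: nk; rewrite /Pn negb_or => /andP[/negPn/eqP -> /negPn/eqP ->].
have := base_count _ _ _ _ h hl us hs.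
have eW : W M A B = w A B l.
  rewrite (W_split _ _ _ _ lM) big1 ?addn0 // => j jl.
  by rewrite /w /Pn; case: (h j jl) => -> ->; rewrite eqxx.
rewrite eW.
have : flag M A B ==> ((B`_l != 0) && (0 <= A`_l * B`_l)).
  apply/implyP; rewrite /flag => /andP[bn ab].
  have Ml : M = l.
    apply/eqP; apply: contraNT bn => Ml.
    by case: (h M Ml) => _ ->; rewrite eqxx.
  by rewrite -Ml bn ab.
case: (flag M A B); case: ((B`_l != 0) && (0 <= A`_l * B`_l)) => //= _; lia.
Qed.

Lemma sumif (a b : nat) : (\sum_(k < b + a) (if (k < a)%N then 1 else 2) = a + 2 * b)%N.
Proof.
rewrite -(big_mkord xpredT (fun k => if (k < a)%N then 1%N else 2%N)).
rewrite (@big_cat_nat _ _ _ a 0 (b + a) _ _ (leq0n a) (leq_addl b a)) /=.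
rewrite (@eq_big_nat _ _ _ 0 a _ (fun _ => 1%N)); last by move=> k /andP[_ ->].
rewrite (@eq_big_nat _ _ _ a (b + a) _ (fun _ => 2%N)); last by move=> k /andP[ak _]; rewrite ltnNge ak.
rewrite !sum_nat_const_nat; lia.
Qed.
End S.
Arguments G {R}. Arguments Pn {R}. Arguments w {R}. Arguments W {R}. Arguments flag {R}. Arguments key {R}.

Theorem mainTheorem9 (R : realType) (i m n : nat) (p q : {poly R}) :
  (m < n + i)%N -> inPi m p -> inPi n q ->
  (exists x : R, 1 < x /\ Ffun i p q x != 0) ->
  forall s : seq R, uniq s ->
    (forall x, x \in s -> 1 < x /\ Ffun i p q x = 0) ->
    (size s <= 2 * n + i)%N /\ (m = (n + i).-1 -> (size s < m + n + 2)%N).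
Proof.
move=> mni hp hq [x0 [x01 fx0]] s us hs.
set N := (n + i)%N.
set B := 'X^i * q.
have GF : forall x, G p B x = Ffun i p q x.
  by move=> x; rewrite /G /Ffun /B hornerM hornerXn; ring.
move/leq_sizeP: hp => hp; move/leq_sizeP: hq => hq.
have hM : forall k, (N < k)%N -> p`_k = 0 /\ B`_k = 0.
  move=> k Nk; split; first by apply: hp; rewrite /N in Nk; lia.
  rewrite /B coefXnM; case: ifP => // _; apply: hq; rewrite /N in Nk; lia.
have hnz : exists k, Pn p B k.
  case: (pselect (exists k, Pn p B k)) => // no; exfalso.
  have hz : forall k, p`_k = 0 /\ B`_k = 0.
    move=> k; have : ~~ Pn p B k by apply/negP => pk; apply: no; exists k.
    by rewrite /Pn negb_or => /andP[/negPn/eqP -> /negPn/eqP ->].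
  have p0 : p = 0 by apply/polyP => k; rewrite coef0; case: (hz k).
  have B0 : B = 0 by apply/polyP => k; rewrite coef0; case: (hz k).
  by move: fx0; rewrite -GF /G p0 B0 !horner0 mulr0 addr0 eqxx.
have hs' : forall x, x \in s -> 1 < x /\ G p B x = 0.
  by move=> x /hs [a b]; rewrite GF.
have := key N (W N p B) p B hM hnz (leqnn _) s us hs'.
have pN : p`_N = 0 by apply: hp; rewrite /N; lia.
have eW : W N p B = (\sum_(k < N) w p B k + 2 * flag N p B)%N.
  rewrite /W big_ord_recr /=; congr (_ + _)%N.
  by rewrite /w /flag /Pn pN mul0r lexx eqxx /= andbT; case: (_ != 0).
have sumb : (\sum_(k < N) w p B k <= i + 2 * n)%N.
  apply: (@leq_trans (\sum_(k < N) (if (k < i)%N then 1 else 2))%N).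
    apply: leq_sum => k _; rewrite /w /Pn; case: ifP => ki.
      rewrite /B coefXnM ki eqxx orbF /=.
      by case: (_ != 0).
    by case: (_ || _); case: (_ != 0).
  by rewrite /N sumif.
rewrite eW; move: sumb; move: (\sum_(k < N) w p B k) => S.
move: (size s) (flag N p B) => z fl; rewrite /N; clear -mni.
case: fl => /= sumb h; split => [|em]; lia.
Qed.
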